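(* Let $S$ be a commutative ring and $I\subseteq S$ an additive subgroup. Then: (1) the blowup $\mathrm{Bl}(I)=\mathrm{Bl}_S(I):=\bigcup_{k\ge 0}(I^k:I^k)_S$ is a subring of $S$; (2) if $R\subseteq S$ is a subring and $RI$ is an invertible ideal of $R$ within $S$, then $\mathrm{Bl}(I)\subseteq R$; (3) if for some $n\ge0$ the set $RI$ is an invertible ideal of $R=(I^n:I^n)_S$ within $S$, then $R=\mathrm{Bl}(I)$; (4) if $S$ is a number field and $I$ is finitely generated and non-zero, then there exists $n\ge 0$ such that $\mathrm{Bl}(I)=(I^n:I^n)_S$, and $\mathrm{Bl}(I)$ is an order.
   Context: For additive subgroups $I,J$ of a commutative ring $S$: $IJ$ is the set of finite sums $\sum x_iy_i$ with $x_i\in I$, $y_i\in J$; $(I:J)_S=\{x\in S: xJ\subseteq I\}$; $I^0=(I:I)_S$ and $I^{n+1}=I^n\cdot I$ for $n\ge0$. For a subring $R\subseteq S$, an invertible ideal of $R$ within $S$ is an $R$-submodule $I\subseteq S$ for which there is an $R$-submodule $J\subseteq S$ with $IJ=R$. A number field is a finite-dimensional field extension of $\mathbb{Q}$; an order is a domain whose additive group is isomorphic to $\mathbb{Z}^n$ for some $n\ge 0$. *)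

(* Defs.v *)
From HB Require Import structures.
From mathcomp Require Import all_boot all_order all_algebra all_field.
Set Implicit Arguments. Unset Strict Implicit. Unset Printing Implicit Defensive.
Import Order.TTheory GRing.Theory Num.Theory.
Local Open Scope ring_scope.

Section Defs.
Variable S : comPzRingType.

Definition set_eq (A B : S -> Prop) : Prop := forall x, A x <-> B x.
Definition set_sub (A B : S -> Prop) : Prop := forall x, A x -> B x.

Definition add_subgroup (I : S -> Prop) : Prop :=
  I 0 /\ (forall x y, I x -> I y -> I (x - y)).

Definition subring (R : S -> Prop) : Prop :=
  R 1 /\ (forall x y, R x -> R y -> R (x - y)) /\
  (forall x y, R x -> R y -> R (x * y)).

Definition prodset (I J : S -> Prop) : S -> Prop := fun z =>
  exists n (a b : 'I_n -> S),
    (forall i, I (a i) /\ J (b i)) /\ z = \sum_(i < n) a i * b i.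

Definition colon (I J : S -> Prop) : S -> Prop := fun x =>
  forall y, J y -> I (x * y).

Fixpoint ipow (I : S -> Prop) (n : nat) : S -> Prop :=
  match n with
  | 0%N => colon I I
  | k.+1 => prodset (ipow I k) I
  end.

Definition blowup (I : S -> Prop) : S -> Prop := fun x =>
  exists k : nat, colon (ipow I k) (ipow I k) x.

Definition submodule (R M : S -> Prop) : Prop :=
  add_subgroup M /\ (forall r m, R r -> M m -> M (r * m)).

Definition invertible_ideal (R I : S -> Prop) : Prop :=
  submodule R I /\ exists J, submodule R J /\ set_eq (prodset I J) R.

Definition fin_gen (I : S -> Prop) : Prop :=
  exists n (g : 'I_n -> S),
    forall x, I x <-> exists c : 'I_n -> int, x = \sum_(i < n) g i *~ c i.

Definition is_order (R : S -> Prop) : Prop :=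
  subring R /\ (1 != 0 :> S) /\
  (forall x y, R x -> R y -> x * y = 0 -> x = 0 \/ y = 0) /\
  exists n (b : 'I_n -> S),
    (forall i, R (b i)) /\
    (forall x, R x <-> exists c : 'I_n -> int, x = \sum_(i < n) b i *~ c i) /\
    (forall c : 'I_n -> int, \sum_(i < n) b i *~ c i = 0 -> forall i, c i = 0).

End Defs.

(* Main.v *)
Require Import Defs.
From HB Require Import structures.
From mathcomp Require Import all_boot all_order all_algebra all_field.
From Stdlib Require Import Classical.
Set Implicit Arguments. Unset Strict Implicit. Unset Printing Implicit Defensive.
Import Order.TTheory GRing.Theory Num.Theory.
Local Open Scope ring_scope.

Section Gen.
Variable S : comPzRingType.
Implicit Types A B I J R : S -> Prop.

Lemma prodset_ind A B (P : S -> Prop) : P 0 ->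
  (forall x y, P x -> P y -> P (x + y)) ->
  (forall a b, A a -> B b -> P (a * b)) -> forall z, prodset A B z -> P z.
Proof.
move=> P0 PD Pab z [n [a [b [H ->]]]].
apply: (big_ind P) => // i _; case: (H i) => ??; exact: Pab.
Qed.

Lemma prodset0 A B : prodset A B 0.
Proof.
exists 0%N, (fun _ => 0), (fun _ => 0); split; first by case.
by rewrite big_ord0.
Qed.

Lemma prodsetM A B a b : A a -> B b -> prodset A B (a * b).
Proof.
move=> Aa Bb; exists 1%N, (fun _ => a), (fun _ => b); split => //.
by rewrite big_ord1.
Qed.

Definition catf n1 n2 (a1 : 'I_n1 -> S) (a2 : 'I_n2 -> S) : 'I_(n1 + n2) -> S :=
  fun i => match split i with inl j => a1 j | inr j => a2 j end.

Lemma prodsetD A B x y : prodset A B x -> prodset A B y -> prodset A B (x + y).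
Proof.
move=> [n1 [a1 [b1 [H1 ->]]]] [n2 [a2 [b2 [H2 ->]]]].
exists (n1 + n2)%N, (catf a1 a2), (catf b1 b2); split.
  by move=> i; rewrite /catf; case: (split i).
rewrite big_split_ord /catf; congr (_ + _); apply: eq_bigr => i _.
  by rewrite -[lshift _ _]/(unsplit (inl i)) unsplitK.
by rewrite -[rshift _ _]/(unsplit (inr i)) unsplitK.
Qed.

Lemma add_subgroupN I x : add_subgroup I -> I x -> I (- x).
Proof. by move=> [I0 IB] Ix; rewrite -sub0r; apply: IB. Qed.

Lemma add_subgroupD I x y : add_subgroup I -> I x -> I y -> I (x + y).
Proof.
move=> hI Ix Iy; have := proj2 hI x (- y) Ix; rewrite opprK; apply.
exact: add_subgroupN.
Qed.

Lemma prodsetN A B x : add_subgroup B -> prodset A B x -> prodset A B (- x).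
Proof.
move=> hB; apply: (prodset_ind (P := fun z => prodset A B (- z))).
- by rewrite oppr0; apply: prodset0.
- by move=> u v Pu Pv; rewrite opprD; apply: prodsetD.
- by move=> a b Aa Bb; rewrite -mulrN; apply: prodsetM => //; apply: add_subgroupN.
Qed.

Lemma prodset_sub A B : add_subgroup B -> add_subgroup (prodset A B).
Proof.
move=> hB; split; first exact: prodset0.
by move=> x y Px Py; apply: prodsetD => //; apply: prodsetN.
Qed.

Lemma colon_subring J : add_subgroup J -> subring (colon J J).
Proof.
move=> [J0 JB]; split; first by move=> y Jy; rewrite mul1r.
split.
  by move=> x y Cx Cy z Jz; rewrite mulrBl; apply: JB; [apply: Cx | apply: Cy].
by move=> x y Cx Cy z Jz; rewrite -mulrA; apply: Cx; apply: Cy.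
Qed.

Lemma subring_sub R : subring R -> add_subgroup R.
Proof.
move=> [R1 [RB _]]; split => //; rewrite -(subrr 1); exact: RB.
Qed.

Lemma ipow_sub I k : add_subgroup I -> add_subgroup (ipow I k).
Proof.
move=> hI; case: k => [|k] /=.
  exact: subring_sub (colon_subring hI).
exact: prodset_sub.
Qed.

Lemma colon_mono I k x : colon (ipow I k) (ipow I k) x ->
  colon (ipow I k.+1) (ipow I k.+1) x.
Proof.
move=> Cx z /=; apply: (prodset_ind (P := fun z => prodset (ipow I k) I (x * z))).
- by rewrite mulr0; apply: prodset0.
- by move=> u v Pu Pv; rewrite mulrDr; apply: prodsetD.
- by move=> a b Aa Bb; rewrite mulrA; apply: prodsetM => //; apply: Cx.
Qed.

Lemma colon_monoN I k k' x : (k <= k')%N -> colon (ipow I k) (ipow I k) x ->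
  colon (ipow I k') (ipow I k') x.
Proof.
move=> /subnKC <-; elim: (k' - k)%N => [|m IH]; first by rewrite addn0.
by move=> Cx; rewrite addnS; apply: colon_mono; apply: IH.
Qed.

Lemma blowup_subring I : add_subgroup I -> subring (blowup I).
Proof.
move=> hI; split.
  by exists 0%N => z Jz; rewrite mul1r.
split.
  move=> x y [k1 C1] [k2 C2]; exists (maxn k1 k2).
  have [_ [hB _]] := colon_subring (ipow_sub (maxn k1 k2) hI).
  by apply: hB; apply: colon_monoN C1 || apply: colon_monoN C2;
     rewrite ?leq_maxl ?leq_maxr.
move=> x y [k1 C1] [k2 C2]; exists (maxn k1 k2).
have [_ [_ hM]] := colon_subring (ipow_sub (maxn k1 k2) hI).
by apply: hM; apply: colon_monoN C1 || apply: colon_monoN C2;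
   rewrite ?leq_maxl ?leq_maxr.
Qed.

Fixpoint jpow R J k := if k is k'.+1 then prodset (jpow R J k') J else R.

Lemma blowup_sub I R : add_subgroup I -> subring R ->
  invertible_ideal R (prodset R I) -> set_sub (blowup I) R.
Proof.
move=> hI hR [_ [J [[hJ JR] eqJ]]].
have hRs := subring_sub hR.
case: hR => R1 [RB RM].
have R0 : R 0 by case: hRs.
have RD x y : R x -> R y -> R (x + y) by apply: add_subgroupD.
have IJ c j : I c -> J j -> R (c * j).
  move=> Ic Jj; apply/eqJ; apply: prodsetM => //.
  by rewrite -[c]mul1r; apply: prodsetM.
have one : prodset I J 1.
  have := (proj2 (eqJ 1) R1).
  apply: prodset_ind; first exact: prodset0.
    by move=> ????; apply: prodsetD.
  move=> a b Pa Jb; move: a Pa.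
  apply: (prodset_ind (P := fun a => prodset I J (a * b))).
  - by rewrite mul0r; apply: prodset0.
  - by move=> ????; rewrite mulrDl; apply: prodsetD.
  - move=> r c Rr Ic; rewrite -mulrA mulrCA.
    by apply: prodsetM => //; apply: JR.
have colR x : colon I I x -> R x.
  move=> Cx; rewrite -[x]mulr1; move: 1 one.
  apply: (prodset_ind (P := fun z => R (x * z))).
  - by rewrite mulr0.
  - by move=> ????; rewrite mulrDr; apply: RD.
  - by move=> c j Ic Jj; rewrite mulrA; apply: IJ => //; apply: Cx.
have C k y z : ipow I k y -> jpow R J k z -> R (y * z).
  elim: k y z => [|k IH] y z /=.
    by move=> Cy Rz; apply: RM => //; apply: colR.
  move=> Py Pz; move: y Py; apply: (prodset_ind (P := fun y => R (y * z))).
  - by rewrite mul0r.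
  - by move=> ????; rewrite mulrDl; apply: RD.
  move=> u c Pu Ic; move: z Pz.
  apply: (prodset_ind (P := fun z => R (u * c * z))).
  - by rewrite mulr0.
  - by move=> ????; rewrite mulrDr; apply: RD.
  move=> v j Pv Jj; rewrite mulrACA.
  by apply: RM; [apply: IH | apply: IJ].
have D k : prodset (ipow I k) (jpow R J k) 1.
  elim: k => [|k IH] /=.
    by rewrite -[1]mulr1; apply: prodsetM => // y Iy; rewrite mul1r.
  suff H z w : prodset (ipow I k) (jpow R J k) z -> prodset I J w ->
    prodset (prodset (ipow I k) I) (prodset (jpow R J k) J) (z * w).
    by rewrite -[1]mulr1; apply: H.
  move=> Pz Pw; move: z Pz.
  apply: (prodset_ind (P := fun z =>
    prodset (prodset (ipow I k) I) (prodset (jpow R J k) J) (z * w))).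
  - by rewrite mul0r; apply: prodset0.
  - by move=> ????; rewrite mulrDl; apply: prodsetD.
  move=> a b Pa Pb; move: w Pw.
  apply: (prodset_ind (P := fun w =>
    prodset (prodset (ipow I k) I) (prodset (jpow R J k) J) (a * b * w))).
  - by rewrite mulr0; apply: prodset0.
  - by move=> ????; rewrite mulrDr; apply: prodsetD.
  move=> c j Ic Jj; rewrite mulrACA.
  by apply: prodsetM; apply: prodsetM.
move=> x [k Cx].
suff H z : prodset (ipow I k) (jpow R J k) z -> R (x * z).
  by rewrite -[x]mulr1; apply: H.
apply: (prodset_ind (P := fun z => R (x * z))).
- by rewrite mulr0.
- by move=> ????; rewrite mulrDr; apply: RD.
by move=> a b Pa Pb; rewrite mulrA; apply: C Pb; apply: Cx.
Qed.

End Gen.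

Section Span.
Variable S : comPzRingType.
Implicit Types A B I J P : S -> Prop.

Lemma sub_mulz I x c : add_subgroup I -> I x -> I (x *~ c).
Proof.
move=> hI Ix.
have hn n : I (x *+ n).
  elim: n => [|n IH]; first by rewrite mulr0n; case: hI.
  by rewrite mulrS; apply: add_subgroupD.
case: c => n; first exact: hn.
by rewrite NegzE mulrNz; apply: add_subgroupN =>//; have := hn n.+1.
Qed.

Lemma sub_sum I (T : finType) (F : T -> S) : add_subgroup I ->
  (forall t, I (F t)) -> I (\sum_t F t).
Proof.
move=> hI HF; apply: (big_ind I) => //; first by case: hI.
by move=> ???; apply: add_subgroupD.
Qed.

Definition zspan (T : finType) (f : T -> S) x :=
  exists c : T -> int, x = \sum_t f t *~ c t.

Lemma zspan_min (T : finType) (f : T -> S) P : add_subgroup P ->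
  (forall t, P (f t)) -> forall x, zspan f x -> P x.
Proof.
move=> hP Pf x [c ->]; apply: sub_sum => // t; exact: sub_mulz.
Qed.

Lemma zspan_sub (T : finType) (f : T -> S) : add_subgroup (zspan f).
Proof.
split.
  by exists (fun=> 0); rewrite big1 // => t _; rewrite mulr0z.
move=> x y [c1 ->] [c2 ->]; exists (fun t => c1 t - c2 t).
by rewrite -sumrB; apply: eq_bigr => t _; rewrite mulrzBr.
Qed.

Lemma zspan_gen (T : finType) (f : T -> S) t : zspan f (f t).
Proof.
exists (fun s => (s == t)%:Z); rewrite (bigD1 t) //= eqxx mulr1z big1 ?addr0 //.
by move=> s /negbTE ->; rewrite mulr0z.
Qed.

Definition fg P := exists (T : finType) (f : T -> S), forall x, P x <-> zspan f x.

Lemma fin_gen_fg P : fin_gen P -> fg P.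
Proof. by move=> [n [g Hg]]; exists 'I_n, g. Qed.

Lemma fg_fin_gen P : fg P -> fin_gen P.
Proof.
move=> [T [f Hf]]; exists #|T|, (fun i => f (enum_val i)) => x.
split => [/Hf | Hx].
  apply: (zspan_min (f := f) (P := zspan (fun i => f (enum_val i)))); first exact: zspan_sub.
  by move=> t; rewrite -(enum_rankK t); apply: (zspan_gen (fun i => f (enum_val i))).
apply/Hf; move: Hx; apply: (zspan_min (f := fun i => f (enum_val i))); first exact: zspan_sub.
by move=> i; apply: zspan_gen.
Qed.

Lemma fg_eq P Q : fg P -> set_eq P Q -> fg Q.
Proof. by move=> [T [f Hf]] E; exists T, f => x; split => [/E/Hf | /Hf/E]. Qed.

Lemma fg_prod A B : add_subgroup B -> fg A -> fg B -> fg (prodset A B).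
Proof.
move=> hB [T1 [f1 H1]] [T2 [f2 H2]].
exists (T1 * T2)%type, (fun t => f1 t.1 * f2 t.2) => x; split.
  apply: prodset_ind.
  - by case: (zspan_sub (fun t : T1 * T2 => f1 t.1 * f2 t.2)).
  - by move=> u v Hu Hv; apply: (add_subgroupD (zspan_sub _) Hu Hv).
  move=> a b /H1 Aa /H2 Bb; move: a Aa b Bb.
  apply: (zspan_min (P := fun a => forall b, zspan f2 b ->
     zspan (fun t : T1 * T2 => f1 t.1 * f2 t.2) (a * b))).
  - split.
      by move=> b _; rewrite mul0r; case: (zspan_sub (fun t : T1 * T2 => f1 t.1 * f2 t.2)).
    move=> u v Hu Hv b Hb; rewrite mulrBl.
    by case: (zspan_sub (fun t : T1 * T2 => f1 t.1 * f2 t.2)) => _; apply; auto.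
  move=> t1; apply: (zspan_min (P := fun b =>
     zspan (fun t : T1 * T2 => f1 t.1 * f2 t.2) (f1 t1 * b))).
  - split.
      by rewrite mulr0; case: (zspan_sub (fun t : T1 * T2 => f1 t.1 * f2 t.2)).
    move=> u v Hu Hv; rewrite mulrBr.
    by case: (zspan_sub (fun t : T1 * T2 => f1 t.1 * f2 t.2)) => _; apply.
  by move=> t2; apply: (zspan_gen (fun t : T1 * T2 => f1 t.1 * f2 t.2) (t1, t2)).
apply: zspan_min; first exact: prodset_sub.
by move=> [t1 t2] /=; apply: prodsetM; [apply/H1 | apply/H2]; apply: zspan_gen.
Qed.

Lemma ipow1 I : add_subgroup I -> set_eq (ipow I 1) I.
Proof.
move=> hI x; split => /=.
  apply: prodset_ind; first by case: hI.
    by move=> ???; apply: add_subgroupD.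
  by move=> a b Ca Ib; apply: Ca.
by move=> Ix; rewrite -[x]mul1r; apply: prodsetM => // y Iy; rewrite mul1r.
Qed.

Lemma ipow_fg I k : add_subgroup I -> fg I -> fg (ipow I k.+1).
Proof.
move=> hI fI; elim: k => [|k IH].
  by apply: fg_eq fI _ => x; split => /(ipow1 hI).
exact: fg_prod.
Qed.

Lemma ipow_exp I k a : add_subgroup I -> I a -> ipow I k.+1 (a ^+ k.+1).
Proof.
move=> hI Ia; elim: k => [|k IH]; first by apply/(ipow1 hI); rewrite expr1.
by rewrite exprSr; apply: prodsetM.
Qed.

End Span.

Section Integral.
Variable F : fieldType.

Lemma integral_fg n (g : 'I_n -> F) y : (exists i, g i != 0) ->
  (forall i, exists c : 'I_n -> int, y * g i = \sum_j g j *~ c j) ->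
  exists p : {poly int}, p \is monic /\ root (map_poly intr p) y.
Proof.
move=> [i0 nz] H.
have H' i : exists c : {ffun 'I_n -> int}, y * g i = \sum_j g j *~ c j.
  by have [c Hc] := H i; exists (finfun c); rewrite Hc; apply: eq_bigr => j _; rewrite ffunE.
have [C HC] := fin_all_exists H'.
pose A : 'M[int]_n := \matrix_(j, i) C i j.
exists (char_poly A); split; first exact: char_poly_monic.
rewrite map_char_poly -eigenvalue_root_char; apply/eigenvalueP.
exists (\row_i g i).
  apply/rowP=> i; rewrite !mxE HC; apply: eq_bigr => j _; rewrite !mxE.
  by rewrite mulrzr.
apply/eqP => /rowP /(_ i0); rewrite !mxE => E; by rewrite E eqxx in nz.
Qed.

End Integral.

Section Trace.
Variable L : fieldExtType rat.
Local Notation d := (\dim (fullv : {vspace L})).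
Definition eb : d.-tuple L := vbasis fullv.
Definition Mat (y : L) : 'M[rat]_d := \matrix_(i, j) coord eb j (eb`_i * y).
Definition Tr (y : L) : rat := \tr (Mat y).

Lemma ebE (x : L) : x = \sum_i coord eb i x *: eb`_i.
Proof. exact: coord_vbasis (memvf x). Qed.

Lemma eb_free : free eb.
Proof. exact: basis_free (vbasisP _). Qed.

Lemma d_gt0 : (0 < d)%N.
Proof.
rewrite lt0n dimv_eq0; apply/eqP => E.
by have := memvf (1 : L); rewrite E memv0 oner_eq0.
Qed.

Lemma MatM y z : Mat (y * z) = Mat y *m Mat z.
Proof.
apply/matrixP => i j; rewrite !mxE mulrA.
rewrite {1}(ebE (eb`_i * y)) mulr_suml linear_sum; apply: eq_bigr => k _.
by rewrite -scalerAl linearZ /= !mxE.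
Qed.

Lemma Mat1 : Mat 1 = 1%:M.
Proof.
by apply/matrixP => i j; rewrite !mxE mulr1 coord_free ?eb_free.
Qed.

Lemma MatD y z : Mat (y + z) = Mat y + Mat z.
Proof. by apply/matrixP => i j; rewrite !mxE mulrDr raddfD. Qed.

Lemma MatZ (a : rat) y : Mat (a *: y) = a *: Mat y.
Proof. by apply/matrixP => i j; rewrite !mxE -scalerAr linearZ. Qed.

Lemma Mat0 : Mat 0 = 0.
Proof. by rewrite -(scale0r 0) MatZ scale0r. Qed.

Lemma Mat_sum (I : finType) (F : I -> L) : Mat (\sum_i F i) = \sum_i Mat (F i).
Proof. exact: (big_morph Mat MatD Mat0). Qed.

Lemma TrD y z : Tr (y + z) = Tr y + Tr z.
Proof. by rewrite /Tr MatD mxtraceD. Qed.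

Lemma TrZ (a : rat) y : Tr (a *: y) = a * Tr y.
Proof. by rewrite /Tr MatZ mxtraceZ. Qed.

Lemma Tr0 : Tr 0 = 0.
Proof. by rewrite /Tr Mat0 mxtrace0. Qed.

Lemma Tr_sum (I : finType) (F : I -> L) : Tr (\sum_i F i) = \sum_i Tr (F i).
Proof. exact: (big_morph Tr TrD Tr0). Qed.

Lemma Tr1 : Tr 1 = d%:R.
Proof. by rewrite /Tr Mat1 mxtrace1. Qed.

Local Notation QtoC := (ratr : rat -> algC).

Lemma Tr_int y (p : {poly int}) : p \is monic -> root (map_poly intr p) y ->
  Tr y \is a Num.int.
Proof.
move=> mp ry.
pose A := map_mx QtoC (Mat y).
have eigAint z : eigenvalue A z -> z \in Aint.
  move=> /eigenvalueP [v Hv nz].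
  have Hpow n : v *m map_mx QtoC (Mat (y ^+ n)) = z ^+ n *: v.
    elim: n => [|n IH]; first by rewrite expr0 Mat1 map_mx1 mulmx1 scale1r.
    by rewrite exprSr MatM map_mxM mulmxA IH -scalemxAl Hv scalerA -exprSr.
  have : v *m map_mx QtoC (Mat (map_poly intr p).[y]) = (map_poly intr p).[z] *: v.
    rewrite !horner_coef !size_map_poly_id0 ?(monicP mp) ?oner_eq0 //.
    rewrite Mat_sum map_mx_sum mulmx_sumr scaler_suml; apply: eq_bigr => i _.
    rewrite !coef_map /= !mulrzl -(scaler_int (p`_i) (y ^+ i)) MatZ map_mxZ.
    by rewrite -scalemxAr Hpow scalerA rmorph_int mulrzl.
  rewrite (rootP ry) Mat0 map_mx0 mulmx0 => /esym/eqP.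
  rewrite scaler_eq0 (negbTE nz) orbF => /eqP rz.
  apply: (root_monic_Aint (p := map_poly intr p)); first exact/rootP.
    by rewrite monicE lead_coef_map_eq (monicP mp) ?rmorph1 ?oner_eq0.
  by apply/polyOverP => i; rewrite coef_map /= rpred_int.
have [rs Hrs] := closed_field_poly_normal (char_poly A).
have cAint : char_poly A \is a polyOver Aint.
  rewrite Hrs (monicP (char_poly_monic A)) scale1r.
  rewrite big_seq; apply: rpred_prod => z zrs; rewrite polyOverXsubC; apply: eigAint.
  rewrite eigenvalue_root_char Hrs (monicP (char_poly_monic A)) scale1r.
  by rewrite root_prod_XsubC.
have trA : \tr A \in Aint.
  rewrite -[\tr A]opprK -char_poly_trace ?d_gt0 //; rewrite rpredN.
  exact: (polyOverP cAint).
rewrite /A trace_map_mx in trA.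
have /intrP [m Hm] := Cint_rat_Aint (Crat_rat _) trA.
apply/intrP; exists m; apply: (fmorph_inj QtoC); rewrite /Tr /= Hm; by rewrite rmorph_int.
Qed.

End Trace.

Lemma nat_min (P : nat -> Prop) n : P n ->
  exists n0, P n0 /\ forall m, P m -> (n0 <= m)%N.
Proof.
elim/ltn_ind: n => n IH Pn.
case: (classic (exists m, (m < n)%N /\ P m)) => [[m [lt Pm]] | N].
  exact: IH lt Pm.
exists n; split => // m Pm; rewrite leqNgt; apply/negP => lt.
by apply: N; exists m.
Qed.

Section Lattice.
Variable S : comPzRingType.

Section G.
Variable g : S -> rat.
Hypothesis hg : forall x y, g (x - y) = g x - g y.
Lemma g0 : g 0 = 0. Proof. by have := hg 0 0; rewrite !subrr. Qed.
Lemma gN x : g (- x) = - g x.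
Proof. by have := hg 0 x; rewrite !sub0r g0 sub0r. Qed.
Lemma gD x y : g (x + y) = g x + g y.
Proof. by have := hg x (- y); rewrite !opprK gN opprK. Qed.
Lemma gMn x n : g (x *+ n) = g x *+ n.
Proof. by elim: n => [|n IH]; rewrite ?mulr0n ?g0 // !mulrS gD IH. Qed.
Lemma gMz x c : g (x *~ c) = g x *~ c.
Proof.
case: c => n; first by rewrite -!pmulrn gMn.
by rewrite NegzE !mulrNz gN -!pmulrn gMn.
Qed.
Lemma gsum (T : finType) (F : T -> S) : g (\sum_t F t) = \sum_t g (F t).
Proof. exact: (big_morph g gD g0). Qed.
End G.

Definition zbasis (H : S -> Prop) := exists m (h : 'I_m -> S),
  (forall j, H (h j)) /\
  (forall x, H x <-> exists c : 'I_m -> int, x = \sum_(j < m) h j *~ c j) /\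
  (forall c : 'I_m -> int, \sum_(j < m) h j *~ c j = 0 -> forall j, c j = 0).

Definition catT (T : Type) n1 n2 (a : 'I_n1 -> T) (b : 'I_n2 -> T) : 'I_(n1 + n2) -> T :=
  fun i => match split i with inl j => a j | inr j => b j end.

Lemma catT_l T n1 n2 (a : 'I_n1 -> T) (b : 'I_n2 -> T) j : catT a b (lshift n2 j) = a j.
Proof. by rewrite /catT -[lshift _ _]/(unsplit (inl j)) unsplitK. Qed.
Lemma catT_r T n1 n2 (a : 'I_n1 -> T) (b : 'I_n2 -> T) j : catT a b (rshift n1 j) = b j.
Proof. by rewrite /catT -[rshift _ _]/(unsplit (inr j)) unsplitK. Qed.

Lemma lattice_basis (H0 : S -> Prop) (r : nat) (f : nat -> S -> rat) :
  add_subgroup H0 ->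
  (forall i x y, f i (x - y) = f i x - f i y) ->
  (forall i x, H0 x -> f i x \is a Num.int) ->
  (forall x, H0 x -> (forall i, (i < r)%N -> f i x = 0) -> x = 0) ->
  zbasis H0.
Proof.
move=> hH0 hf fint finj.
suff Q k : forall H, add_subgroup H -> (forall x, H x -> H0 x) ->
    (forall x, H x -> forall i, (k <= i)%N -> (i < r)%N -> f i x = 0) -> zbasis H.
  by apply: (Q r) => // x _ i ri ir; rewrite leqNgt ir in ri.
elim: k => [|k IH] H hH sH van.
  have z x : H x -> x = 0 by move=> Hx; apply: finj (sH _ Hx) _ => i; apply: van.
  exists 0%N, (fun _ => 0); split; first by case.
  split; last by move=> c _; case.
  move=> x; split.
    by move=> Hx; exists (fun _ => 0); rewrite big_ord0; apply: z.
  by move=> [c ->]; rewrite big_ord0; case: hH.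
pose H' x := H x /\ f k x = 0.
have hH' : add_subgroup H'.
  split; first by split; [case: hH | apply: g0].
  move=> x y [Hx fx] [Hy fy]; split; first by case: hH => _; apply.
  by rewrite hf fx fy subrr.
have [m' [h' [Hh' [span' ind']]]] : zbasis H'.
  apply: IH => //; first by move=> x [Hx _]; apply: sH.
  move=> x [Hx fx] i; rewrite leq_eqVlt => /orP [/eqP <- //| lt] ir.
  exact: van.
case: (classic (exists x, H x /\ f k x != 0)) => [[x0 [Hx0 nz0]] | N]; last first.
  have HH' x : H x -> H' x.
    move=> Hx; split => //; apply/eqP; apply/negPn/negP => nz.
    by apply: N; exists x.
  exists m', h'; split; first by move=> j; case: (Hh' j).
  split => // x; split; first by move/HH'/span'.
  by move/span' => [].
have /intrP [t0 Ht0] := fint k x0 (sH _ Hx0).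
have exP : exists n, (fun n => exists x, H x /\ f k x = n%:R /\ (0 < n)%N) n.
  case: t0 Ht0 => n Ht0.
    exists n, x0; split => //; split; first by rewrite Ht0 -pmulrn.
    by rewrite lt0n; apply/eqP => n0; move: nz0; rewrite Ht0 n0 eqxx.
  exists n.+1, (- x0); split; first by apply: add_subgroupN.
  by rewrite gN // Ht0 NegzE mulrNz opprK -pmulrn.
have [nn Pnn] := exP.
have [n0 [[x1 [Hx1 [fx1 n0pos]]] n0min]] := nat_min (P := fun n => exists x, H x /\ f k x = n%:R /\ (0 < n)%N) Pnn.
have red x : H x -> exists q : int, H' (x - x1 *~ q).
  move=> Hx; have /intrP [t Ht] := fint k x (sH _ Hx).
  exists (t %/ n0%:Z)%Z.
  have Hxq : H (x - x1 *~ (t %/ n0%:Z)%Z).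
    by apply: (proj2 hH) => //; apply: sub_mulz.
  split => //.
  have n0nz : (n0%:Z != 0) by rewrite -lt0n.
  have fe : f k (x - x1 *~ (t %/ n0%:Z)%Z) = ((t %% n0%:Z)%Z)%:~R.
    rewrite hf gMz // Ht fx1 pmulrn -mulrzA -mulrzBr.
    set q := (t %/ n0%:Z)%Z; set rr := (t %% n0%:Z)%Z.
    have E : t = q * n0%:Z + rr by apply: divz_eq.
    by rewrite {1}E [q * _]mulrC addrAC subrr add0r.
  rewrite fe; have rge := modz_ge0 t n0nz.
  have rlt := ltz_pmod t (n0pos : 0 < n0%:Z).
  move: fe rge rlt; set rr := (t %% n0%:Z)%Z => fe rge rlt.
  have [rn Hrn] : exists rn : nat, rr = rn%:Z by exists `|rr|%N; rewrite gez0_abs.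
  rewrite Hrn in fe rlt *; rewrite ltz_nat in rlt.
  case: rn Hrn fe rlt => [|rn] Hrn fe rlt //.
  have : (n0 <= rn.+1)%N.
    by apply: n0min; exists (x - x1 *~ (t %/ n0%:Z)%Z); split => //; rewrite fe -pmulrn.
  by rewrite leqNgt rlt.
have fH' x : H' x -> f k x = 0 by case.
exists (m' + 1)%N, (catT h' (fun _ => x1)).
have Hh j : H (catT h' (fun _ => x1) j).
  by rewrite /catT; case: (split j) => j' //; case: (Hh' j').
split => //; split.
  move=> x; split.
    move=> Hx; have [q Hq] := red x Hx; have [c' Hc'] := proj1 (span' _) Hq.
    exists (catT c' (fun _ => q)); rewrite big_split_ord big_ord1.
    rewrite (eq_bigr (fun j => h' j *~ c' j)); last by move=> j _; rewrite !catT_l.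
    by rewrite -Hc' !catT_r; apply/esym/subrK.
  move=> [c ->]; apply: sub_sum => // j; apply: sub_mulz => //.
move=> c; rewrite big_split_ord big_ord1 !catT_r => E.
set S' := (X in X + _ = 0) in E.
have HS' : H' S'.
  by apply: sub_sum => // j; rewrite catT_l; apply: sub_mulz.
have cl : c (rshift m' ord0) = 0.
  have := congr1 (f k) E; rewrite gD // fH' // gMz // fx1 g0 // add0r => /eqP.
  by rewrite mulrz_eq0 pnatr_eq0 (gtn_eqF n0pos) orbF => /eqP.
have c0 : forall j, c (lshift 1 j) = 0.
  have S'0 : S' = 0 by move: E; rewrite cl mulr0z addr0.
  apply: ind'; rewrite -[RHS]S'0 /S'.
  by apply: eq_bigr => j _; rewrite catT_l.
move=> j; rewrite -(splitK j); case: (split j) => j' /=; first exact: c0.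
by rewrite (ord1 j').
Qed.

End Lattice.

Lemma nat_max (P : nat -> Prop) N n : P n -> (forall m, P m -> (m <= N)%N) ->
  exists n0, P n0 /\ forall m, P m -> (m <= n0)%N.
Proof.
move=> Pn bnd.
have Q0 : (fun j => P (N - j)%N) (N - n)%N by rewrite /= subKn ?bnd.
have [j [Pj jmin]] := nat_min (P := fun j => P (N - j)%N) Q0.
exists (N - j)%N; split => // m Pm.
have := jmin (N - m)%N; rewrite subKn ?bnd // => /(_ Pm) le.
by rewrite leq_subRL ?(leq_trans le (leq_subr _ _)) // addnC -leq_subRL ?bnd.
Qed.

Section RingLattice.
Variable L : fieldExtType rat.
Local Notation d := (\dim (fullv : {vspace L})).

Lemma ring_lattice (B : L -> Prop) : subring B ->
  (forall x, B x -> Tr x \is a Num.int) -> zbasis B.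
Proof.
move=> hB Bint.
have [B1 [BB BM]] := hB.
have hBs := subring_sub hB.
pose P n := exists s : seq L, size s = n /\ free s /\ (forall x, x \in s -> B x).
have P0 : P 0%N by exists [::]; split => //; split; [exact: nil_free | by []].
have Pbnd m : P m -> (m <= d)%N.
  move=> [s [<- [fs _]]]; rewrite -(eqP fs); exact: dimvS (subvf _).
have [r [[s [sz [fs sB]]] rmax]] := nat_max P0 Pbnd.
pose bs := in_tuple s.
have inV x : B x -> x \in <<s>>%VS.
  move=> Bx; apply/negPn/negP => nx.
  have : (size (x :: s) <= r)%N.
    apply: rmax; exists (x :: s); split => //; split.
      by rewrite free_cons nx fs.
    by move=> z; rewrite inE => /orP [/eqP -> | /sB].
  by rewrite /= sz ltnn.
rewrite -sz in rmax.
pose G : 'M[rat]_(size s) := \matrix_(i, j) Tr (bs`_i * bs`_j).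
have Bb (i : 'I_(size s)) : B (bs`_i) by apply: sB; apply: mem_nth.
have Gint (i j : 'I_(size s)) : Tr (bs`_i * bs`_j) \is a Num.int by apply: Bint; apply: BM.
pose Gz : 'M[int]_(size s) := \matrix_(i, j) Num.floor (G i j).
have GzE : map_mx intr Gz = G.
  by apply/matrixP => i j; rewrite !mxE (floorK (Gint i j)).
have mulV u w : u \in <<s>>%VS -> w \in <<s>>%VS -> u * w \in <<s>>%VS.
  move=> Hu Hw.
  rewrite (@coord_span _ _ _ bs u Hu) (@coord_span _ _ _ bs w Hw).
  rewrite mulr_suml; apply: rpred_sum => i _; rewrite mulr_sumr.
  apply: rpred_sum => j _; rewrite -scalerAl -scalerAr; do 2!apply: rpredZ.
  apply: inV; apply: BM; apply: Bb.
have isA : is_aspace <<s>>%VS.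
  by rewrite /is_aspace has_algid1 ?inV //=; apply/prodvP => u w; apply: mulV.
have Dnz : \det Gz != 0.
  apply/negP => /eqP D0.
  have : \det G == 0 by rewrite -GzE det_map_mx D0 rmorph0.
  move=> /det0P [v vnz vG].
  pose y := \sum_i v ord0 i *: bs`_i.
  have ynz : y != 0.
    apply/negP => /eqP y0; move/eqP: vnz; apply; apply/rowP => i.
    by rewrite mxE; have := elimT (@vector.freeP _ _ _ bs) fs; move=> /(_ _ y0) ->.
  have yV : y \in <<s>>%VS.
    by apply: rpred_sum => i _; apply: rpredZ; apply: memv_span; apply: mem_nth.
  have yiV : y^-1 \in <<s>>%VS.
    by have : y^-1 \in ASpace isA by rewrite memvV.
  have Tyb (j : 'I_(size s)) : Tr (y * bs`_j) = 0.
    have := congr1 (fun M : 'M_(1, size s) => M ord0 j) vG; rewrite !mxE => <-.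
    rewrite /y mulr_suml Tr_sum; apply: eq_bigr => i _.
    by rewrite -scalerAl TrZ mxE.
  have : Tr (y * y^-1) = 0.
    rewrite (@coord_span _ _ _ bs _ yiV) mulr_sumr Tr_sum big1 // => j _.
    by rewrite -scalerAr TrZ Tyb mulr0.
  rewrite mulfV // Tr1 => /eqP; rewrite pnatr_eq0 => /eqP d0.
  by have := d_gt0 L; rewrite d0.
have Dq x (i : 'I_(size s)) : B x ->
    (\det Gz)%:~R * coord bs i x \is a Num.int.
  move=> Bx.
  pose q := \row_i coord bs i x.
  pose tz : 'rV[int]_(size s) := \row_j Num.floor (Tr (x * bs`_j)).
  have xE := @coord_span _ _ _ bs _ (inV x Bx).
  have qG : q *m G = map_mx intr tz.
    apply/rowP => j; rewrite !mxE floorK; last by apply: Bint; apply: BM => //.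
    rewrite [in RHS]xE mulr_suml Tr_sum; apply: eq_bigr => k _.
    by rewrite !mxE -scalerAl TrZ.
  have := congr1 (fun M : 'M_(1, size s) => (M *m \adj G) ord0 i) qG.
  rewrite -mulmxA mul_mx_adj mul_mx_scalar -GzE det_map_mx -map_mx_adj -map_mxM.
  by rewrite !mxE => E; apply/intrP; exists (\sum_j tz ord0 j * (\adj Gz) j i); exact: E.
pose f i x := \sum_(j < size s | val j == i) (\det Gz)%:~R * coord bs j x.
have fj x (j : 'I_(size s)) : f j x = (\det Gz)%:~R * coord bs j x.
  by rewrite /f (big_pred1 j).
apply: (lattice_basis (r := size s) (f := f)) => //.
- move=> i x y; rewrite /f -sumrB; apply: eq_bigr => j _.
  by rewrite raddfB mulrBr.
- by move=> i x Bx; apply: rpred_sum => j _; apply: Dq.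
move=> x Bx f0.
rewrite (@coord_span _ _ _ bs _ (inV x Bx)) big1 // => j _.
have := f0 j (ltn_ord j); rewrite fj => /eqP; rewrite mulf_eq0 intr_eq0 (negbTE Dnz) /=.
by move/eqP => ->; rewrite scale0r.
Qed.
End RingLattice.

Theorem proposition4p37 :
  (forall (S : comPzRingType) (I : S -> Prop),
    add_subgroup I ->
    [/\ subring (blowup I),
        (forall R : S -> Prop, subring R ->
           invertible_ideal R (prodset R I) -> set_sub (blowup I) R)
      & (forall n : nat,
           invertible_ideal (colon (ipow I n) (ipow I n))
             (prodset (colon (ipow I n) (ipow I n)) I) ->
           set_eq (colon (ipow I n) (ipow I n)) (blowup I))]) /\
  (forall (L : fieldExtType rat) (I : L -> Prop),
    add_subgroup I -> fin_gen I -> (exists x, I x /\ x != 0) ->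
    (exists n : nat, set_eq (blowup I) (colon (ipow I n) (ipow I n))) /\
    is_order (blowup I)).
Proof.
split.
  move=> S I hI; split.
  - exact: blowup_subring.
  - by move=> R hR inv; apply: blowup_sub.
  - move=> n inv x; split; first by exists n.
    exact: (blowup_sub hI (colon_subring (ipow_sub n hI)) inv).
move=> L I hI fgI [a [Ia anz]].
have fgI' := fin_gen_fg fgI.
have Bint x : blowup I x -> Tr x \is a Num.int.
  move=> [k Cx]; have Cx' := colon_mono Cx.
  have [n [g Hg]] := fg_fin_gen (ipow_fg k hI fgI').
  have [p [mp rp]] : exists p : {poly int}, p \is monic /\ root (map_poly intr p) x.
    apply: (integral_fg (g := g)).
      case: (classic (exists i, g i != 0)) => // N; exfalso.
      have [c Hc] := proj1 (Hg _) (ipow_exp k hI Ia).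
      move: Hc; rewrite big1 => [/eqP|i _].
        by rewrite expf_eq0 (negbTE anz) andbF.
      have -> : g i = 0 by apply/eqP/negPn/negP => h; apply: N; exists i.
      by rewrite mul0rz.
    move=> i; apply/Hg; apply: Cx'; apply/Hg.
    exact: (zspan_gen g i).
  exact: Tr_int mp rp.
have [m [h [Hh [span ind]]]] := ring_lattice (blowup_subring hI) Bint.
have [K HK] : exists K : 'I_m -> nat, forall j, colon (ipow I (K j)) (ipow I (K j)) (h j).
  exact: (fin_all_exists (P := fun j k => colon (ipow I k) (ipow I k) (h j)) Hh).
pose n := (\max_(j < m) K j)%N.
have HKn j : colon (ipow I n) (ipow I n) (h j).
  by apply: colon_monoN (HK j); apply: leq_bigmax.
split.
  exists n => x; split; last by exists n.
  move=> /span [c ->]; apply: sub_sum => [|j].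
    exact: subring_sub (colon_subring (ipow_sub n hI)).
  apply: (sub_mulz (I := colon (ipow I n) (ipow I n))) => //; exact: subring_sub (colon_subring (ipow_sub n hI)).
split; first exact: blowup_subring.
split; first exact: oner_neq0.
split.
  by move=> x y _ _ /eqP; rewrite mulf_eq0 => /orP [/eqP|/eqP]; auto.
by exists m, h.
Qed.
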